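(* Consider one group of $p'$ PEs holding locally sorted string arrays $S_0',\dots,S_{p'-1}'$ with concatenation $S'$, partitioned into $r$ buckets by string-based regular sampling with sampling factor $v>0$, where $\omega=|S'|/(p'(v+1))$ need not be an integer and samples are drawn with spacing $\lceil\omega\rceil$. If $k\ge1$ and $|S'|=\Omega(p'(v+1)k)$, then every bucket $B^j$ contains at most $\bigl(1+\frac{r}{v}\bigr)\bigl(1+\frac1k\bigr)\frac{|S'|}{r}$ strings.
   Context: String-based regular sampling with sampling factor $v$ (where $r$ divides $p'$): $p'(v+1)$ samples (possibly overlapping) are drawn from the sorted local arrays such that on each PE at most $\lceil\omega\rceil$ strings lie between two consecutive local samples, where $\omega=|S'|/(p'(v+1))$; PE $i$'s samples are $V_i$. The union $V$ of all samples is sorted and splitters $f_j=V[j|V|/r-1]$ for $0<j<r$ are chosen, $f_0=-\infty$, $f_r=\infty$. Buckets are $B^j=\bigcup_i\{s\in S_i':f_j<s\le f_{j+1}\}$, $j=0,\dots,r-1$. *)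

(* Defs.v *)
From HB Require Import structures.
From mathcomp Require Import all_boot all_order all_algebra.
From mathcomp Require Import reals.
Set Implicit Arguments. Unset Strict Implicit. Unset Printing Implicit Defensive.
Import Order.TTheory GRing.Theory Num.Theory.

(* Strings are modelled as elements of an arbitrary totally ordered type T
   (e.g. strings with the lexicographic order).  Samples of PE i are given by their
   positions idx i (0-based indices into S i). *)

Section Sampling.
Context {d : Order.disp_t} {T : orderType d} {p : nat}.
Implicit Types (S : 'I_p -> seq T) (idx : 'I_p -> seq nat).
Local Open Scope order_scope.

Definition total_size S : nat := (\sum_(i < p) size (S i))%N.

Definition local_samples S idx (i : 'I_p) : seq T :=
  match S i with
  | [::] => [::]
  | x :: _ => [seq nth x (S i) a | a <- idx i]
  end.

Definition sorted_samples S idx : seq T :=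
  sort <=%O (flatten [seq local_samples S idx i | i <- enum 'I_p]).

(* Valid regular sampling with spacing c (= ceil omega): the sample positions
   of PE i are valid, nondecreasing (so possibly overlapping), and at most c
   strings lie between two consecutive local samples, where the array
   boundaries act as sentinels: the segments [0, a_1], (a_t, a_{t+1}],
   (a_m, |S_i| - 1] have at most c strings each.  Here this is expressed as:
   the sequence 0, a_1+1, ..., a_m+1, |S_i| is nondecreasing with consecutive
   differences at most c. *)
Definition local_sampling_ok (c : int) (n : nat) (a : seq nat) : Prop :=
  let b := 0%N :: rcons (map S a) n in
  sorted leq b /\ all (fun x => x < n)%N a /\
  forall t, (t.+1 < size b)%N -> ((nth 0 b t.+1 - nth 0 b t)%:Z <= c)%R.

(* membership of string s in bucket B^j : f_j < s <= f_{j+1}, with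
   f_0 = -oo, f_r = +oo and f_j = V[j |V|/r - 1] for 0 < j < r *)
Definition in_bucket S idx (r : nat) (j : nat) (s : T) : bool :=
  let V := sorted_samples S idx in
  match V with
  | [::] => true
  | x :: _ =>
    let f t := nth x V (t * (size V %/ r) - 1)%N in
    ((j == 0)%N || (f j < s)) && ((j.+1 == r)%N || (s <= f j.+1))
  end.

Definition bucket_size S idx (r j : nat) : nat :=
  (\sum_(i < p) count (in_bucket S idx r j) (S i))%N.

End Sampling.

(* Main.v *)
Require Import Defs.
From HB Require Import structures.
From mathcomp Require Import all_boot all_order all_algebra.
From mathcomp Require Import reals.
From mathcomp Require Import zify ring lra.
Import Order.TTheory GRing.Theory Num.Theory.

Lemma interval_lemma (d : Order.disp_t) (T : orderType d) (P : pred T) (x0 : T) :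
  (forall x y z, (x <= y)%O -> (y <= z)%O -> P x -> P z -> P y) ->
  forall s : seq T, sorted <=%O s ->
  exists l u, [/\ l <= u <= size s, count P s = u - l &
    forall t, t < size s -> P (nth x0 s t) = (l <= t < u)].
Proof.
move=> Pconv; elim=> [|h t IH] /= Hs.
  by exists 0, 0; split => // t.
have Ht : sorted <=%O t by move: Hs; case: t {IH} => //= a t /andP[].
have [l [u [Hlu Hc Hn]]] := IH Ht.
case Ph: (P h).
  case: (ltnP l u) => Hl.
  - have l0 : l = 0.
      case: l Hlu Hc Hn Hl => // l Hlu Hc Hn Hl.
      have t0 : 0 < size t by lia.
      have := Hn 0 t0; have := Hn l.+1 ltac:(lia).
      move=> Pl P0.
      have {}Pl : P (nth x0 t l.+1) by rewrite Pl; lia.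
      have {}P0 : P (nth x0 t 0) = false by rewrite P0.
      suff : P (nth x0 t 0) by rewrite P0.
      apply: (Pconv h _ (nth x0 t l.+1)) => //.
      + have := le_sorted_leq_nth x0 (Hs : sorted <=%O (h :: t)) (x:=0) (y:=1).
        by apply => //; rewrite inE /=; lia.
      + apply: (le_sorted_leq_nth x0 Ht) => //; rewrite inE /=; lia.
    subst l; exists 0, u.+1; split; first by lia.
      by rewrite Hc; lia.
    by case=> [|t'] //= Ht'; rewrite Hn.
  - exists 0, 1; split; first by lia.
      by rewrite Hc; lia.
    by case=> [|t'] //= Ht'; rewrite Hn //; lia.
exists l.+1, u.+1; split; first by lia.
  by rewrite Hc; lia.
by case=> [|t'] //= Ht'; rewrite Hn.
Qed.

Lemma gap_lemma (c : nat) : forall (b : seq nat) h l u,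
  sorted leq (h :: b) ->
  (forall t, t.+1 < size (h :: b) -> nth 0 (h :: b) t.+1 - nth 0 (h :: b) t <= c) ->
  h <= l -> l <= u -> u <= last h b ->
  u - l <= c * (size (undup [seq x <- h :: b | l < x < u]) + 1).
Proof.
elim=> [|h' t IH] h l u Hs Hg hl lu ul.
  by move: ul => /= ul; have -> : u - l = 0 by lia.
have /andP[hh' {}Hs] : (h <= h') && sorted leq (h' :: t) := Hs.
have Hg' : forall t0, t0.+1 < size (h' :: t) ->
    nth 0 (h' :: t) t0.+1 - nth 0 (h' :: t) t0 <= c.
  by move=> t0 Ht0; exact: (Hg t0.+1).
have g0 : h' - h <= c by exact: (Hg 0).
have Ef : [seq x <- h :: h' :: t | l < x < u] = [seq x <- h' :: t | l < x < u].
  by rewrite {1}/filter (_ : l < h = false) //; lia.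
rewrite Ef.
case: (leqP h' l) => Hh'l.
  exact: IH h' l u Hs Hg' Hh'l lu ul.
case: (leqP u h') => Huh'.
  rewrite mulnDr muln1; lia.
have := IH h' h' u Hs Hg' (leqnn _) (ltnW Huh') ul.
have -> : [seq x <- h' :: t | h' < x < u] = [seq x <- t | h' < x < u].
  by rewrite {1}/filter ltnn.
have -> : [seq x <- h' :: t | l < x < u] = h' :: [seq x <- t | l < x < u].
  by rewrite {1}/filter Hh'l Huh'.
move=> IH'.
set Y := undup _ in IH'.
set X := undup _.
have HY : size Y + 1 <= size X.
  have -> : size Y + 1 = size (h' :: Y) by rewrite /= addn1.
  apply: uniq_leq_size.
    rewrite /= undup_uniq andbT /Y mem_undup mem_filter; lia.
  move=> x; rewrite inE /X /Y !mem_undup !mem_filter inE => /orP[/eqP->|].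
    by rewrite eqxx.
  move=> /andP[/andP[a b] e]; rewrite mem_filter e andbT; apply/orP; right; lia.
have : c * (size Y + 1) + c <= c * size X + c.
  by rewrite leq_add2r leq_mul2l HY orbT.
rewrite mulnDr muln1; lia.
Qed.

Lemma V_count (d : Order.disp_t) (T : orderType d) (V : seq T) (x0 : T) (r j : nat) :
  sorted <=%O V -> (r %| size V) -> 0 < size V -> j < r ->
  size (undup [seq s <- V | ((j == 0) || (nth x0 V (j * (size V %/ r) - 1) < s)%O)
     && ((j.+1 == r) || (s <= nth x0 V (j.+1 * (size V %/ r) - 1))%O)])
  <= size V %/ r.
Proof.
move=> Vs rd V0 jr.
set m := size V %/ r.
have Vm : size V = m * r by rewrite /m divnK.
set U := undup _.
rewrite -(size_iota (j * m) m) -(size_map (index^~ V) U).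
apply: uniq_leq_size.
  rewrite map_inj_in_uniq ?undup_uniq //.
  move=> x y; rewrite /U !mem_undup !mem_filter => /andP[_ xV] /andP[_ yV] e.
  by rewrite -(nth_index x0 xV) e nth_index.
move=> i /mapP[s]; rewrite /U mem_undup mem_filter => /andP[/andP[Hl Hu] sV] ->.
have iV : index s V < size V by rewrite index_mem.
have ns : nth x0 V (index s V) = s by rewrite nth_index.
have m0 : 0 < m by move: V0; rewrite Vm muln_gt0 => /andP[].
have jm : j * m < size V by rewrite Vm mulnC ltn_pmul2l.
have jm1 : j.+1 * m <= size V by rewrite Vm mulnC leq_pmul2l.
rewrite mem_iota; apply/andP; split.
  case/orP: Hl => [/eqP -> //|Hl].
  rewrite leqNgt; apply/negP => Hi.
  have : (nth x0 V (index s V) <= nth x0 V (j * m - 1))%O.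
    apply: (le_sorted_leq_nth x0 Vs); rewrite ?inE /=; lia.
  by rewrite ns leNgt Hl.
case/orP: Hu => [/eqP Hj|Hu].
  by move: iV; rewrite Vm -Hj mulnS; lia.
rewrite ltnNge; apply/negP => Hi.
have yV : j.+1 * m - 1 < size V by lia.
have Hy : j.+1 * m - 1 < index s V by nia.
have : (nth x0 V (j.+1 * m - 1) <= nth x0 V (index s V))%O.
  apply: (le_sorted_leq_nth x0 Vs); rewrite ?inE /=; lia.
rewrite ns => H2.
have E : nth x0 V (j.+1 * m - 1) = s by apply/le_anti; rewrite H2 Hu.
have := before_find x0 Hy; rewrite E /= eqxx //.
Qed.

Lemma key (d : Order.disp_t) (T : orderType d) (s : seq T) (a : seq nat) (cn : nat)
  (P : pred T) (Vf : seq T) (x0 : T) :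
  (forall x y z, (x <= y)%O -> (y <= z)%O -> P x -> P z -> P y) ->
  sorted <=%O s -> uniq s -> local_sampling_ok (cn%:Z) (size s) a ->
  (forall y, y \in a -> nth x0 s y \in Vf) ->
  exists W, [/\ uniq W, {subset W <= s}, {subset W <= [seq x <- Vf | P x]}
     & count P s <= cn * (size W + 1)].
Proof.
move=> Pconv ss us [Hsort [Hall Hgap]] Hin.
have [l [u [/andP[lu un] Hc Hn]]] := @interval_lemma _ _ P x0 Pconv s ss.
set b := rcons (map S a) (size s).
have Hg : forall t, t.+1 < size (0 :: b) -> nth 0 (0 :: b) t.+1 - nth 0 (0 :: b) t <= cn.
  by move=> t Ht; have := Hgap t Ht; rewrite lez_nat.
have := @gap_lemma cn b 0 l u Hsort Hg (leq0n l) lu; rewrite /b last_rcons => /(_ un).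
set F := undup _ => Hb.
exists [seq nth x0 s x.-1 | x <- F].
have HF : forall x, x \in F -> [/\ 0 < x, l <= x.-1 < u & x.-1 \in a].
  move=> x; rewrite /F mem_undup mem_filter => /andP[/andP[lx xu]].
  rewrite inE mem_rcons inE => /orP[/eqP x0'|/orP[/eqP xn|/mapP[y ya xy]]].
  - lia.
  - lia.
  - by subst x; rewrite /=; split => //; lia.
split.
- rewrite map_inj_in_uniq ?undup_uniq //.
  move=> x y /HF[x0' xlu _] /HF[y0' ylu _] /eqP.
  have hx : x.-1 < size s by lia.
  have hy : y.-1 < size s by lia.
  rewrite nth_uniq // => /eqP; lia.
- move=> w /mapP[x /HF[x0' xlu _] ->]; have hx : x.-1 < size s by lia.
  exact: mem_nth.
- move=> w /mapP[x /HF[x0' xlu xa] ->]; rewrite mem_filter Hin // andbT.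
  by rewrite Hn //; lia.
- by rewrite Hc size_map.
Qed.

Local Open Scope ring_scope.

Lemma real_ineq (R : realType) (N P m p r v k : R) :
  0 < p -> 0 < r -> 0 < v -> 1 <= k -> P = p * (v + 1) -> m * r = P ->
  P * k <= N ->
  (N / P + 1) * (m + p) <= (1 + r / v) * (1 + k^-1) * (N / r).
Proof.
move=> p0 r0 v0 k1 EP Em HN.
have k0 : 0 < k by lra.
have P0 : 0 < P by rewrite EP; apply: mulr_gt0 => //; lra.
have N0 : 0 <= N by apply: le_trans HN; apply: mulr_ge0; lra.
have mE : m = P / r by rewrite -Em mulfK //; lra.
have E1 : (N / P + 1) * (m + p) = ((N + P) / r) * (1 + r / (v + 1)).
  rewrite mE EP; field; repeat split; lra.
have E2 : (1 + r / v) * (1 + k^-1) * (N / r) = ((N * (1 + k^-1)) / r) * (1 + r / v).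
  field; repeat split; lra.
rewrite E1 E2; apply: ler_pM.
- apply: divr_ge0; lra.
- apply: addr_ge0; [lra|apply: divr_ge0; lra].
- rewrite ler_pM2r ?invr_gt0 //.
  rewrite mulrDr mulr1 lerD2l.
  by rewrite -(ler_pM2r k0) mulfVK ?gt_eqF // -EP.
- rewrite lerD2l ler_pM2l // lef_pV2 ?posrE; lra.
Qed.

Theorem theorem16 (R : realType) (d : Order.disp_t) (T : orderType d)
  (p r v : nat) (S : 'I_p -> seq T) (idx : 'I_p -> seq nat) (k : R) :
  (0 < p)%N -> (0 < r)%N -> (r %| p)%N -> (0 < v)%N ->
  (forall i, sorted <=%O (S i)) ->
  uniq (flatten [seq S i | i <- enum 'I_p]) ->
  (\sum_(i < p) size (idx i))%N = (p * v.+1)%N ->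
  (forall i, local_sampling_ok
     (Num.ceil ((total_size S)%:R / (p * v.+1)%:R : R)) (size (S i)) (idx i)) ->
  1 <= k ->
  (p * v.+1)%:R * k <= (total_size S)%:R ->
  forall j : 'I_r,
    (bucket_size S idx r j)%:R
      <= (1 + r%:R / v%:R) * (1 + k^-1) * ((total_size S)%:R / r%:R).
Proof.
move=> p0 r0 rp v0 Ss Su Hidx Hok k1 Hk j.
set N := total_size S.
set X := (N%:R / (p * v.+1)%:R : R).
have X0 : 0 <= X by rewrite /X divr_ge0 ?ler0n.
have c0 : (0 <= Num.ceil X)%R by rewrite ceil_ge0; apply: (lt_le_trans _ X0); rewrite ltrN10.
set cn := `|Num.ceil X|%N.
have Ec : Num.ceil X = cn%:Z by rewrite /cn abszE ger0_norm.
have Hok' : forall i, local_sampling_ok cn%:Z (size (S i)) (idx i).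
  by move=> i; rewrite -Ec; exact: Hok.
clear Hok.
have Hidx0 : forall i, S i = [::] -> idx i = [::].
  move=> i Ei; have [_ [Ha _]] := Hok' i; move: Ha; rewrite Ei.
  by case: (idx i).
have Vsize : size (sorted_samples S idx) = (p * v.+1)%N.
  rewrite /sorted_samples size_sort size_flatten /shape -map_comp sumnE big_map.
  rewrite big_enum /= -Hidx; apply: eq_bigr => i _ /=.
  rewrite /local_samples; case Ei: (S i) => [|x s].
    by rewrite Hidx0.
  by rewrite size_map.
have Vsort : sorted <=%O (sorted_samples S idx) by apply: sort_sorted; exact: le_total.
have Vin : forall i (x1 : T) s', S i = x1 :: s' -> forall y, y \in idx i ->
    nth x1 (S i) y \in sorted_samples S idx.
  move=> i x1 s' Ei y yi.
  rewrite /sorted_samples mem_sort; apply/flattenP.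
  exists (local_samples S idx i); first by apply: map_f; rewrite mem_enum.
  by rewrite /local_samples Ei; apply: map_f.
set P := in_bucket S idx r j.
have Pconv : forall x y z, (x <= y)%O -> (y <= z)%O -> P x -> P z -> P y.
  move=> x y z xy yz; rewrite /P /in_bucket.
  case: (sorted_samples S idx) => // x0 V'.
  move=> /andP[Hx1 Hx2] /andP[Hz1 Hz2]; apply/andP; split.
    by case/orP: Hx1 => [->//|H]; rewrite (lt_le_trans H xy) orbT.
  by case/orP: Hz2 => [->//|H]; rewrite (le_trans yz H) orbT.
set cnt := (fun i => count P (S i)).
have Hall : forall js : seq 'I_p, uniq (flatten [seq S i | i <- js]) ->
  exists Wall, [/\ uniq Wall, {subset Wall <= flatten [seq S i | i <- js]},
    {subset Wall <= [seq x <- sorted_samples S idx | P x]} &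
    (\sum_(i <- js) cnt i <= cn * (size Wall + size js))%N].
  elim=> [|i js IH] /=.
    by move=> _; exists [::]; split => //; rewrite big_nil.
  rewrite cat_uniq => /and3P[ui dis ujs].
  have [Wall [uW sW fW cW]] := IH ujs.
  have [Wi [uWi sWi fWi cWi]] : exists W, [/\ uniq W, {subset W <= S i},
     {subset W <= [seq x <- sorted_samples S idx | P x]} & (cnt i <= cn * (size W + 1))%N].
    case Ei: (S i) => [|x1 s'].
      by exists [::]; split => //; rewrite /cnt Ei.
    rewrite /cnt -Ei.
    apply: (@key _ _ (S i) (idx i) cn P (sorted_samples S idx) x1 Pconv (Ss i) ui (Hok' i)).
    exact: Vin Ei.
  exists (Wi ++ Wall); split.
  - rewrite cat_uniq uWi uW andbT /=; apply/hasPn => x /sW xin.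
    apply/negP => /sWi xi; move/hasPn: dis => /(_ x xin); by rewrite xi.
  - by move=> x; rewrite !mem_cat => /orP[/sWi ->|/sW ->]; rewrite ?orbT.
  - by move=> x; rewrite mem_cat => /orP[/fWi|/fW].
  - rewrite big_cons size_cat /=; apply: leq_trans (leq_add cWi cW) _.
    rewrite -mulnDr; apply: eq_leq; congr (cn * _).
    by rewrite addn1 addSn addnS addnA.
have [Wall [uW _ fW cW]] := Hall _ Su.
rewrite size_enum_ord in cW.
have rV : (r %| size (sorted_samples S idx))%N by rewrite Vsize; exact: dvdn_mulr.
have VP : (0 < size (sorted_samples S idx))%N by rewrite Vsize muln_gt0 p0.
have Hm : (size Wall <= size (sorted_samples S idx) %/ r)%N.
  move: fW Vsort rV VP; rewrite /P /in_bucket.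
  case: (sorted_samples S idx) => // x0 V' fW Vsort rV VP.
  apply: (leq_trans _ (@V_count _ _ _ x0 r j Vsort rV VP (ltn_ord j))).
  apply: uniq_leq_size => // w /fW.
  by rewrite mem_undup.
rewrite Vsize in Hm.
set m := ((p * v.+1) %/ r)%N in Hm.
have Hb : (bucket_size S idx r j <= cn * (m + p))%N.
  have -> : bucket_size S idx r j = (\sum_(i <- enum 'I_p) cnt i)%N.
    by rewrite big_enum.
  by apply: leq_trans cW _; rewrite leq_mul2l leq_add2r Hm orbT.
have Hcn : (cn%:R : R) <= X + 1.
  have := ceilB1_lt X; rewrite Ec intrB /= => H.
  have -> : (cn%:R : R) = (cn%:Z)%:~R by [].
  lra.
apply: (@le_trans _ _ ((X + 1) * (m%:R + p%:R))).
  rewrite -natrD; apply: (@le_trans _ _ (cn%:R * (m + p)%:R)).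
    by rewrite -natrM ler_nat.
  by rewrite ler_wpM2r.
apply: real_ineq.
- by rewrite ltr0n.
- by rewrite ltr0n.
- by rewrite ltr0n.
- exact: k1.
- by rewrite natrM -natr1.
- by rewrite -natrM /m divnK // dvdn_mulr.
- exact: Hk.
Qed.
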